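(* Let $G$ be a profinite group that is a Cartesian product of non-abelian finite simple groups. If every element of $G$ has a countable Engel sink, then $G$ is finite.
   Context: Commutators are left-normed, $[a,b]=a^{-1}b^{-1}ab$, and $[x,{}_n g]=[x,g,\dots,g]$ with $g$ repeated $n$ times. An Engel sink of an element $g$ of a group $G$ is a set $\mathscr E(g)\subseteq G$ such that for every $x\in G$ there is a positive integer $n(x,g)$ with $[x,{}_n g]\in\mathscr E(g)$ for all $n\ge n(x,g)$. ''Countable'' means finite or denumerable. *)

(* Defs.v *)
From Stdlib Require Import List.
From mathcomp Require Import all_boot all_fingroup all_solvable.
Set Implicit Arguments. Unset Strict Implicit. Unset Printing Implicit Defensive.
Local Open Scope group_scope.

Definition cart (I : Type) (S : I -> finGroupType) := forall i : I, S i.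

Definition ccomm (I : Type) (S : I -> finGroupType) (x g : cart S) : cart S :=
  fun i => [~ x i, g i].

Definition engel_comm (I : Type) (S : I -> finGroupType) (x g : cart S) (n : nat)
  : cart S := iter n (fun z => ccomm z g) x.

Definition engel_sink (I : Type) (S : I -> finGroupType) (g : cart S)
  (E : cart S -> Prop) : Prop :=
  forall x : cart S, exists n0 : nat, 0 < n0 /\
    forall n : nat, n0 <= n -> E (engel_comm x g n).

(* countable = finite or denumerable: injects into nat *)
Definition countable_set (T : Type) (E : T -> Prop) : Prop :=
  exists f : T -> nat, forall a b, E a -> E b -> f a = f b -> a = b.

Definition finite_type (T : Type) : Prop :=
  exists s : seq T, forall t : T, List.In t s.

(* Main.v *)
Require Import Defs.
From mathcomp Require Import all_boot all_fingroup all_solvable.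
From mathcomp Require Import zify.
From Stdlib Require Import Classical FunctionalExtensionality Eqdep.
From Stdlib Require ClassicalEpsilon.
Set Implicit Arguments. Unset Strict Implicit. Unset Printing Implicit Defensive.
Local Open Scope group_scope.
Section Engel.
Variable gT : finGroupType.
Implicit Types G H M : {group gT}.

Lemma max_proper M G : maximal M G -> M \proper G.
Proof. by move/maxgroupp. Qed.

Lemma max_sub_eq M1 M2 G : maximal M1 G -> maximal M2 G -> M1 \subset M2 -> M1 = M2.
Proof.
move=> m1 m2 s12; case/maxgroupP: m1 => _ /(_ M2 (maxgroupp m2) s12) => e; by apply: val_inj; rewrite /= e.
Qed.

Lemma uniq_max G u y :
  y \in G -> (forall H, u \in H -> y \in 'N(H) -> G \subset H) ->
  (forall M, maximal M G -> nilpotent M) ->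
  forall M1 M2, maximal M1 G -> maximal M2 G -> u \in M1 -> u \in M2 -> M1 = M2.
Proof.
move=> Gy Kgen nilM.
suff W: forall n M1 M2, #|G| - #|M1 :&: M2| < n -> maximal M1 G -> maximal M2 G ->
   u \in M1 -> u \in M2 -> M1 = M2.
  by move=> M1 M2; apply: (W (#|G| - #|M1 :&: M2|).+1).
elim=> // n IH M1 M2 hn mM1 mM2 uM1 uM2.
have [s12|ns12] := boolP (M1 \subset M2); first exact: (max_sub_eq mM1 mM2 s12).
have [s21|ns21] := boolP (M2 \subset M1); first exact: esym (max_sub_eq mM2 mM1 s21).
pose D := (M1 :&: M2)%G.
have sM1G : M1 \subset G by apply: proper_sub (max_proper mM1).
have sM2G : M2 \subset G by apply: proper_sub (max_proper mM2).
have uD : u \in D by rewrite inE uM1.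
have nyD : y \notin 'N(D).
  apply/negP => yN; have := Kgen D uD yN => sGD.
  by move: ns12; rewrite (subset_trans sM1G (subset_trans sGD (subsetIr _ _))).
have sNG : 'N_G(D) \subset G by apply: subsetIl.
have [eqNG | [M3 mM3 sNM3]] := maximal_exists sNG.
  by move: Gy; rewrite -eqNG => /setIP[_ yN]; move: nyD; rewrite yN.
have uM3 : u \in M3.
  apply: (subsetP sNM3); rewrite inE (subsetP sM1G) //=.
  by apply: (subsetP (normG D)).
have step : forall Mi : {group gT}, maximal Mi G -> Mi \subset G -> D \subset Mi -> ~~ (Mi \subset D) -> Mi = M3.
  move=> Mi mMi sMiG sDMi nMiD.
  have pD : D \proper Mi by rewrite properE sDMi.
  have := nilpotent_proper_norm (nilM _ mMi) pD => pN.
  have sN : 'N_Mi(D) \subset Mi :&: M3.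
    rewrite subsetI subsetIl /=; apply: subset_trans sNM3.
    by rewrite setSI.
  have c1 := proper_card pN.
  have c2 := subset_leq_card sN.
  have c3 : #|Mi :&: M3| <= #|G| by apply: subset_leq_card; rewrite subIset ?sMiG.
  have c4 : #|D| <= #|G| by apply: subset_leq_card; rewrite subIset ?sM1G.
  have uMi : u \in Mi by apply: (subsetP sDMi).
  apply: (IH Mi M3 _ mMi mM3 uMi uM3).
  have hn2 : #|G| - #|D| < n.+1 := hn.
  move: hn2 c1 c2 c3 c4; clear; lia.
have e1 : M1 = M3.
  apply: step mM1 sM1G (subsetIl _ _) _.
  by rewrite subsetI subxx.
have e2 : M2 = M3.
  apply: step mM2 sM2G (subsetIr _ _) _.
  by rewrite subsetI subxx andbT.
by rewrite e1 e2.
Qed.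

Lemma nat_step (P : nat -> bool) n : ~~ P 0 -> P n -> exists k, ~~ P k /\ P k.+1.
Proof.
move=> P0; elim: n => [|n IH] Pn; first by rewrite Pn in P0.
have [Pn'|nPn] := boolP (P n); first exact: IH.
by exists n.
Qed.

Lemma iter_in G u x k : u \in G -> x \in G -> iter k (fun z => [~ z, u]) x \in G.
Proof. by move=> Gu Gx; elim: k => [|k IH] //=; rewrite groupR. Qed.

Lemma Zlem G u y : u \in G -> y \in G ->
  (forall H, u \in H -> y \in 'N(H) -> G \subset H) ->
  (forall M, maximal M G -> nilpotent M) ->
  (forall x, x \in G -> exists n, iter n (fun z => [~ z, u]) x = 1) ->
  ~~ (G \subset <[u]>) -> False.
Proof.
move=> Gu Gy Kgen nilM hE ncyc.
have suG : <[u]>%G \subset G by rewrite cycle_subG.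
have [eq|[M mM suM]] := maximal_exists suG.
  by move: ncyc; rewrite -eq subxx.
have uM : u \in M by rewrite -cycle_subG.
have pM := max_proper mM.
have nGM : ~~ (G \subset M) by move: pM; rewrite properE => /andP[].
have nyM : y \notin 'N(M).
  by apply/negP => yN; move: nGM; rewrite (Kgen M uM yN).
have yM : y \notin M by apply: contra nyM; apply: (subsetP (normG M)).
have [n hn] := hE y Gy.
pose P k := iter k (fun z => [~ z, u]) y \in M.
have [k [nPk Pk1]] : exists k, ~~ P k /\ P k.+1.
  by apply: (@nat_step P n); rewrite /P //= hn group1.
set z := iter k (fun z => [~ z, u]) y in nPk Pk1.
have Gz : z \in G by apply: iter_in.
have Pk1' : [~ z, u] \in M by exact: Pk1.
have uzM : u ^ z \in M.
  have : u^-1 ^ z \in M.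
    by have := groupM Pk1' (groupVr uM); rewrite commgEr mulgK.
  by rewrite conjVg groupV.
have uM' : u \in (M :^ z^-1)%G by rewrite /= mem_conjgV.
have mM' : maximal (M :^ z^-1)%G G.
  have e : (G :^ z^-1) = G := conjGid (groupVr Gz).
  by rewrite -[X in maximal _ X]e maximalJ.
have eqM := uniq_max Gy Kgen nilM mM' mM uM' uM.
have zN : z \in 'N(M).
  rewrite -groupV; apply/normP.
  by have := congr1 val eqM.
have sMN : M \subset 'N_G(M) by rewrite subsetI (proper_sub pM) normG.
have [pN|npN] := boolP ('N_G(M) \proper G).
  case/maxgroupP: mM => _ /(_ _ pN sMN) eqN.
  by move: nPk; rewrite /P -/z -eqN inE Gz zN.
have eqNG : 'N_G(M) = G.
  by apply/eqP; rewrite eqEproper subsetIl /= npN.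
by move: nyM; rewrite -eqNG in Gy; case/setIP: Gy => _ ->.
Qed.


Definition engelG (G : {set gT}) := forall x g, x \in G -> g \in G ->
  exists n, iter n (fun z => [~ z, g]) x = 1.

Lemma zorn n : forall G, #|G| < n -> engelG G -> nilpotent G.
Proof.
elim: n => // n IH G hG hE.
have nilH : forall H, H \proper G -> nilpotent H.
  move=> H pH; apply: IH.
    by have := proper_card pH; move: hG; clear; lia.
  move=> x g Hx Hg; apply: hE; exact: (subsetP (proper_sub pH)).
suff sGF : G \subset 'F(G) by apply: nilpotentS sGF (Fitting_nil G).
rewrite -{1}(Sylow_gen G) gen_subG; apply/bigcupsP => P /SylowP[p pr_p sylP].
have sOF : 'O_p(G) \subset 'F(G).
  by apply: Fitting_max; [apply: pcore_normal | apply: pgroup_nil (pcore_pgroup p G)].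
apply: subset_trans sOF; apply/subsetP => u Pu.
have sPG := pHall_sub sylP.
have Gu : u \in G := subsetP sPG u Pu.
have pu : p.-elt u := mem_p_elt (pHall_pgroup sylP) Pu.
apply: (Baer_Suzuki Gu) => y Gy.
set H := <<[set u; u ^ y]>>%G.
have Huy : [set u; u ^ y] \subset G by rewrite subUset !sub1set Gu groupJ.
have sHG : H \subset G by rewrite gen_subG.
have puy : p.-elt (u ^ y) by rewrite p_eltJ.
have [pH|npH] := boolP (H \proper G).
  have nH := nilH H pH.
  have hall := nilpotent_pcore_Hall p nH.
  have nO := pcore_normal p H.
  have Hu : u \in H by rewrite mem_gen // !inE eqxx.
  have Huy' : u ^ y \in H by rewrite mem_gen // !inE eqxx orbT.
  apply: pgroupS (pcore_pgroup p H).
  rewrite gen_subG subUset !sub1set.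
  by rewrite (mem_normal_Hall hall nO Hu) (mem_normal_Hall hall nO Huy') pu puy.
have eHG : G \subset H by move: npH; rewrite properE sHG /= negbK.
have [//|npg] := boolP (p.-group H).
exfalso; apply: (@Zlem G u y Gu Gy).
- move=> K uK yK; apply: subset_trans eHG _.
  by rewrite gen_subG subUset !sub1set uK memJ_norm.
- by move=> M mM; apply: nilH; apply: max_proper.
- by move=> x Gx; apply: hE.
- apply/negP => sGu; move/negP: npg; apply.
  by apply: pgroupS (subset_trans sHG sGu) pu.
Qed.

Lemma nonengel : simple [set: gT] -> ~~ abelian [set: gT] ->
  exists x g : gT, forall n, iter n (fun z => [~ z, g]) x <> 1.
Proof.
move=> hs hna; apply: NNPP => hne.
have hE : engelG [set: gT].
  move=> x g _ _; apply: NNPP => h1.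
  apply: hne; exists x, g => n e; apply: h1; by exists n.
have nil := zorn (ltnSn #|[set: gT]%G|) hE.
have pr := simple_sol_prime (nilpotent_sol nil) hs.
by move: hna; rewrite cyclic_abelian // prime_cyclic.
Qed.

End Engel.

Definition xmi := ClassicalEpsilon.excluded_middle_informative.
Definition cid := ClassicalEpsilon.constructive_indefinite_description.

Lemma engel_comm_app (I : Type) (S : I -> finGroupType) (x g : cart S) n i :
  engel_comm x g n i = iter n (fun z => [~ z, g i]) (x i).
Proof. by elim: n => [|n IH] //=; rewrite /ccomm IH. Qed.

Lemma iter_comm1 (gT : finGroupType) (g : gT) n : iter n (fun z => [~ z, g]) 1 = 1.
Proof. by elim: n => [|n IH] //=; rewrite IH comm1g. Qed.

Lemma In_of_mem (T : eqType) (x : T) (s : seq T) : x \in s -> List.In x s.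
Proof.
elim: s => [|a s IH] //=; rewrite in_cons => /orP[/eqP ->|h].
  by left.
by right; exact: IH h.
Qed.

Lemma fin_inj (T U : Type) (F : T -> U) (L : list U) :
  (forall t t', F t = F t' -> t = t') -> (forall t, List.In (F t) L) -> finite_type T.
Proof.
move=> inj hL.
pose g u := match xmi (exists t, F t = u) with
  | left h => Some (proj1_sig (cid h)) | right _ => None end.
exists (List.flat_map (fun u => match g u with Some t => t :: nil | None => nil end) L).
move=> t; apply/List.in_flat_map; exists (F t); split; first exact: hL.
rewrite /g; case: (xmi _) => [h|h]; last by exfalso; apply: h; exists t.
case: (cid h) => t' /= ht'; left; exact: inj.
Qed.

Section Fin.
Variables (I : Type) (S : I -> finGroupType).

Fixpoint LL (l : list I) : list (list {i : I & S i}) :=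
  match l with
  | nil => [:: nil]
  | i :: l' => List.flat_map (fun a : S i => List.map (cons (existT _ i a)) (LL l')) (enum (S i))
  end.

Lemma In_LL (l : list I) (t : cart S) :
  List.In (List.map (fun i => existT _ i (t i)) l) (LL l).
Proof.
elim: l => [|i l IH] /=; first by left.
apply/List.in_flat_map; exists (t i); split.
  by apply: In_of_mem; rewrite mem_enum.
by apply: List.in_map.
Qed.

Lemma map_eq_In (A B : Type) (F F' : A -> B) (l : list A) :
  List.map F l = List.map F' l -> forall a, List.In a l -> F a = F' a.
Proof.
elim: l => [|b l IH] //= [e1 e2] a [<-|h] //; exact: IH.
Qed.

Lemma fin_cart (s : list I) : (forall i, List.In i s) -> finite_type (cart S).
Proof.
move=> hs; apply: (@fin_inj _ _ (fun t : cart S => List.map (fun i => existT _ i (t i)) s) (LL s)).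
  move=> t t' e; apply: functional_extensionality_dep => i.
  have := map_eq_In e (hs i) => /= h.
  exact: (inj_pair2 _ _ _ _ _ h).
by move=> t; apply: In_LL.
Qed.
End Fin.

Lemma inj_nat (I : Type) : ~ finite_type I -> exists e : nat -> I, forall m n, e m = e n -> m = n.
Proof.
move=> hfin.
have pick : forall l : list I, {i | ~ List.In i l}.
  move=> l; apply: cid; apply: NNPP => h; apply: hfin; exists l => t.
  by apply: NNPP => ht; apply: h; exists t.
pose L := fix L n := match n with 0 => nil | n'.+1 => proj1_sig (pick (L n')) :: L n' end.
pose e n := proj1_sig (pick (L n)).
have inL : forall m n, m < n -> List.In (e m) (L n).
  move=> m; elim=> [|n IH] //= ; rewrite ltnS leq_eqVlt => /orP[/eqP ->|h].
    by left.
  by right; apply: IH.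
have notin : forall n, ~ List.In (e n) (L n) by move=> n; rewrite /e; case: (pick _).
exists e => m n emn.
case: (ltngtP m n) => // h.
  by exfalso; apply: (notin n); rewrite -emn; apply: inL.
by exfalso; apply: (notin m); rewrite emn; apply: inL.
Qed.

Lemma cantor (F : (nat -> bool) -> nat) :
  (forall J J', F J = F J' -> forall k, J k = J' k) -> False.
Proof.
move=> inj.
pose J0 n := if xmi (exists J, F J = n /\ J n = true) then false else true.
case E: (J0 (F J0)).
  have := E; rewrite {1}/J0; case: xmi => // h _.
  by apply: h; exists J0; split.
have := E; rewrite {1}/J0; case: xmi => // [[J [hJ hJn]]] _.
by have := inj _ _ hJ (F J0); rewrite hJn E.
Qed.

Theorem lemma7p1 (I : Type) (S : I -> finGroupType)
  (hsimple : forall i : I, simple [set: S i])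
  (hnonab : forall i : I, ~~ abelian [set: S i])
  (hsink : forall g : cart S, exists E : cart S -> Prop,
      engel_sink g E /\ countable_set E) :
  finite_type (cart S).
Proof.
case: (classic (finite_type I)) => [[s hs] | hinf]; first exact: fin_cart hs.
exfalso.
have [e einj] := inj_nat hinf.
have hpair : forall i, exists x, exists g : S i, forall n, iter n (fun z => [~ z, g]) x <> 1.
  by move=> i; exact: nonengel (hsimple i) (hnonab i).
pose xs : cart S := fun i => proj1_sig (cid (hpair i)).
pose gg : cart S := fun i => proj1_sig (cid (proj2_sig (cid (hpair i)))).
have hne : forall i n, iter n (fun z => [~ z, gg i]) (xs i) <> 1.
  move=> i n; rewrite /gg /xs; case: (cid (hpair i)) => x /= hx.
  by case: (cid hx) => g /= hg; exact: hg.
have [E [sink [f finj]]] := hsink gg.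
pose inJ (J : nat -> bool) i : bool :=
  if xmi (exists k, e k = i /\ J k = true) then true else false.
have inJe : forall J k, inJ J (e k) = J k.
  move=> J k; rewrite /inJ; case: xmi => [[k' [ek Jk]] | h].
    by move=> /=; have ekk := einj _ _ ek; subst k'; rewrite Jk.
  by case Jk: (J k) => //; exfalso; apply: h; exists k.
pose xJ J : cart S := fun i => if inJ J i then xs i else 1.
pose N J := proj1_sig (cid (sink (xJ J))).
have EJ : forall J, E (engel_comm (xJ J) gg (N J)).
  move=> J; rewrite /N; case: (cid (sink (xJ J))) => n0 /= [_ h].
  exact: h.
apply: (@cantor (fun J => f (engel_comm (xJ J) gg (N J)))).
move=> J J' hf k.
have eq := finj _ _ (EJ J) (EJ J') hf.
have := congr1 (fun t : cart S => t (e k)) eq => /=.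
rewrite !engel_comm_app /xJ !inJe.
case: (J k); case: (J' k) => //=; rewrite iter_comm1 => h; exfalso.
  exact: hne _ _ h.
exact: hne _ _ (esym h).
Qed.
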